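(* Let $n\ge3$, $0<\ell\le m$, and let $J$ be a real symmetric diagonally balanced $n\times n$ matrix with $\ell\le J_{ij}\le m$ for all $i\ne j$. For $1\le i\le n$ let $J_{(i)}$ be the lower-right $(n-i+1)\times(n-i+1)$ principal submatrix of $J$ (rows and columns $i,\dots,n$), with eigenvalues $\lambda_1\le\dots\le\lambda_{n-i+1}$. Then $$(n-2)\ell\le\lambda_j\le(n-2)m\ \ (1\le j\le n-i),\qquad (2n-i-1)\ell\le\lambda_{n-i+1}\le(2n-i-1)m.$$ If $J$ is only assumed diagonally dominant (with $\ell\le J_{ij}\le m$ for $i\ne j$), the lower bounds still hold.
   Context: For a real $n\times n$ matrix $J$, $\Delta_i(J)=|J_{ii}|-\sum_{j\ne i}|J_{ij}|$; $J$ is diagonally dominant if $\Delta_i(J)\ge0$ for all $i$ and diagonally balanced if $\Delta_i(J)=0$ for all $i$.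
   Formalization: The diagonal entries $J_{ii}$ of J are also assumed nonnegative, in both the diagonally balanced and the diagonally dominant case. The statement above fails without it. *)

(* Defs.v *)
From HB Require Import structures.
From mathcomp Require Import all_boot all_order all_algebra.
Set Implicit Arguments. Unset Strict Implicit. Unset Printing Implicit Defensive.
Import Order.TTheory GRing.Theory Num.Theory.
Local Open Scope ring_scope.

Definition Delta (R : numDomainType) (n : nat) (J : 'M[R]_n) (i : 'I_n) : R :=
  `|J i i| - \sum_(j < n | j != i) `|J i j|.

Definition diag_dominant (R : numDomainType) (n : nat) (J : 'M[R]_n) : Prop :=
  forall i, 0 <= Delta J i.

Definition diag_balanced (R : numDomainType) (n : nat) (J : 'M[R]_n) : Prop :=
  forall i, Delta J i = 0.

Definition shift_ord (n k : nat) (a : 'I_(n - k)) : 'I_n :=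
  @Ordinal n (k + a) (ltac:(by rewrite -ltn_subRL)).

(* lower-right principal submatrix obtained by deleting the first k rows
   and columns; J_(i) (1-based i, rows/cols i..n) is lr_sub i.-1 J *)
Definition lr_sub (R : Type) (n k : nat) (J : 'M[R]_n) : 'M[R]_(n - k) :=
  \matrix_(a, b) J (shift_ord a) (shift_ord b).

Definition sorted_eigenvalues (R : realFieldType) (p : nat) (A : 'M[R]_p)
  (s : seq R) : Prop :=
  sorted <=%R s /\ char_poly A = \prod_(x <- s) ('X - x%:P).

(* Main.v *)
Set Warnings "-notation-overridden,-ambiguous-paths,-notation-incompatible-prefix".
Require Import Defs.
From HB Require Import structures.
From mathcomp Require Import all_boot all_order all_algebra.
From mathcomp Require Import sesquilinear spectral complex ring lra zify.
Import Order.TTheory GRing.Theory Num.Theory.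
Local Open Scope ring_scope.
Local Open Scope sesquilinear_scope.
Set Implicit Arguments. Unset Strict Implicit. Unset Printing Implicit Defensive.

Section CoreS.
Variable C : numClosedFieldType.

Definition qf k (M : 'M[C]_k) (x : 'rV[C]_k) : C := (x *m M *m x ^t*) 0 0.

Lemma qfE k M x : @qf k M x = \sum_a \sum_b x 0 a * M a b * (x 0 b)^*.
Proof.
rewrite /qf mxE exchange_big /=; apply: eq_bigr => b _.
by rewrite !mxE mulr_suml.
Qed.

Lemma qfD k M N x : @qf k (M + N) x = qf M x + qf N x.
Proof. by rewrite /qf mulmxDr mulmxDl mxE. Qed.

Lemma qfN k M x : @qf k (- M) x = - qf M x.
Proof. by rewrite /qf mulmxN mulNmx mxE. Qed.

Lemma qfB k M N x : @qf k (M - N) x = qf M x - qf N x.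
Proof. by rewrite qfD qfN. Qed.

Lemma qfZ k a M x : @qf k (a *: M) x = a * qf M x.
Proof. by rewrite /qf -scalemxAr -scalemxAl mxE. Qed.

Lemma qf_diag k d x : @qf k (diag_mx d) x = \sum_a d 0 a * `|x 0 a| ^+ 2.
Proof.
rewrite /qf mul_mx_diag mxE; apply: eq_bigr => a _.
by rewrite !mxE normCK mulrA [x 0 a * _]mulrC.
Qed.

Lemma qf1 k x : @qf k 1%:M x = \sum_a `|x 0 a| ^+ 2.
Proof.
have -> : (1%:M : 'M[C]_k) = diag_mx (const_mx 1) by apply/matrixP=> i j; rewrite !mxE.
by rewrite qf_diag; apply: eq_bigr => a _; rewrite mxE mul1r.
Qed.

Lemma qfE1 k x : @qf k (const_mx 1) x = `|\sum_a x 0 a| ^+ 2.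
Proof.
rewrite qfE normCK rmorph_sum mulr_suml; apply: eq_bigr => a _.
by rewrite mulr_sumr; apply: eq_bigr => b _; rewrite mxE mulr1.
Qed.


Lemma term_ge0 (q u v : C) : q \is Num.real ->
  0 <= `|q| * (`|u| ^+ 2 + `|v| ^+ 2) + q * (u * v^* + v * u^*).
Proof.
move=> qr; have [q0|q0] := boolP (0 <= q).
  have -> : `|q| * (`|u| ^+ 2 + `|v| ^+ 2) + q * (u * v^* + v * u^*) = q * `|u + v| ^+ 2.
    by rewrite ger0_norm // !normCK rmorphD; ring.
  by rewrite mulr_ge0 // exprn_ge0.
have -> : `|q| * (`|u| ^+ 2 + `|v| ^+ 2) + q * (u * v^* + v * u^*) = (- q) * `|u - v| ^+ 2.
  have q0' : q < 0 by rewrite real_ltNge // real0.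
  by rewrite ltr0_norm // !normCK rmorphB; ring.
by rewrite mulr_ge0 // ?exprn_ge0 // oppr_ge0 ltW // real_ltNge // real0.
Qed.

Lemma qf_ge0 k (Q : 'M[C]_k) x : (forall a b, Q a b \is Num.real) ->
  (forall a b, Q a b = Q b a) -> (forall a, \sum_(b | b != a) `|Q a b| <= Q a a) ->
  0 <= qf Q x.
Proof.
move=> Qr Qs Qd.
pose O : 'M[C]_k := \matrix_(a, b) if a == b then 0 else Q a b.
pose d : 'rV[C]_k := \row_a Q a a.
have QE : Q = O + diag_mx d.
  apply/matrixP => a b; rewrite !mxE; case: eqP => [->|]; first by rewrite add0r.
  by rewrite addr0.
have Os a b : O a b = O b a by rewrite !mxE eq_sym Qs.
have Or a b : O a b \is Num.real by rewrite mxE; case: eqP => // _; rewrite real0.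
pose u a := `|x 0 a| ^+ 2.
have RE a : \sum_b `|O a b| = \sum_(b | b != a) `|Q a b|.
  rewrite [RHS]big_mkcond; apply: eq_bigr => b _; rewrite mxE eq_sym.
  by case: eqP => _ //=; rewrite normr0.
have key : \sum_a \sum_b (`|O a b| * (u a + u b) + O a b * (x 0 a * (x 0 b)^* + x 0 b * (x 0 a)^*))
   = 2 * (\sum_a (\sum_b `|O a b|) * u a) + 2 * qf O x.
  have e1 : \sum_a \sum_b `|O a b| * u a = \sum_a (\sum_b `|O a b|) * u a.
    by apply: eq_bigr => a _; rewrite mulr_suml.
  have e2 : \sum_a \sum_b `|O a b| * u b = \sum_a (\sum_b `|O a b|) * u a.
    rewrite exchange_big /=; apply: eq_bigr => a _; rewrite mulr_suml.
    by apply: eq_bigr => b _; rewrite Os.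
  have e3 : \sum_a \sum_b O a b * (x 0 a * (x 0 b)^*) = qf O x.
    rewrite qfE; apply: eq_bigr => a _; apply: eq_bigr => b _; ring.
  have e4 : \sum_a \sum_b O a b * (x 0 b * (x 0 a)^*) = qf O x.
    rewrite qfE exchange_big /=; apply: eq_bigr => a _; apply: eq_bigr => b _.
    by rewrite Os; ring.
  rewrite !mulr_natl !mulr2n -{1}e1 -e2 -{1}e3 -e4 -!big_split /=.
  apply: eq_bigr => a _; rewrite -!big_split /=; apply: eq_bigr => b _; ring.
have E2 : 2 * qf Q x = \sum_a \sum_b (`|O a b| * (u a + u b) + O a b * (x 0 a * (x 0 b)^* + x 0 b * (x 0 a)^*))
   + 2 * \sum_a (Q a a - \sum_b `|O a b|) * u a.
  rewrite key {1}QE qfD qf_diag.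
  under [X in _ = _ + _ + 2 * X]eq_bigr => a _ do rewrite mulrBl.
  rewrite sumrB.
  under eq_bigr => a _ do rewrite mxE.
  rewrite /u; ring.
have : 0 <= 2 * qf Q x.
  rewrite E2; apply: addr_ge0.
    apply: sumr_ge0 => a _; apply: sumr_ge0 => b _; exact: term_ge0.
  apply: mulr_ge0; first by [].
  apply: sumr_ge0 => a _; apply: mulr_ge0; last exact: exprn_ge0.
  by rewrite subr_ge0 RE.
by rewrite pmulr_rge0.
Qed.


Lemma char_poly_conj k (P Q D : 'M[C]_k) : Q *m P = 1%:M ->
  char_poly (Q *m D *m P) = char_poly D.
Proof.
move=> QP; rewrite /char_poly.
have QPp : map_mx polyC Q *m map_mx polyC P = 1%:M by rewrite -map_mxM QP map_mx1.
have -> : char_poly_mx (Q *m D *m P) =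
   map_mx polyC Q *m char_poly_mx D *m map_mx polyC P.
  rewrite /char_poly_mx mulmxBr mulmxBl !map_mxM.
  by rewrite mul_mx_scalar -scalemxAl QPp scalemx1.
rewrite !det_mulmx mulrC mulrA -det_mulmx.
have -> : map_mx polyC P *m map_mx polyC Q = 1%:M by apply: mulmx1C.
by rewrite det1 mul1r.
Qed.

Lemma spectral_form k (A : 'M[C]_k) (s : seq C) : A \is hermsymmx ->
  char_poly A = \prod_(x <- s) ('X - x%:P) ->
  exists (P : 'M[C]_k) (d : 'rV[C]_k),
  [/\ P *m P^t* = 1%:M, P^t* *m P = 1%:M, (forall i, d 0 i \is Num.real),
     perm_eq s [seq d 0 i | i <- enum 'I_k] &
     forall x, qf A x = \sum_i d 0 i * `|(x *m P^t*) 0 i| ^+ 2].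
Proof.
move=> Ah chA.
have Pu := spectral_unitarymx A.
set P := spectralmx A in Pu *.
have PP : P *m P^t* = 1%:M by apply/unitarymxP.
have PP' : P^t* *m P = 1%:M by apply: mulmx1C.
have AE : A = P^t* *m diag_mx (spectral_diag A) *m P.
  rewrite -invmx_unitary //; exact/orthomx_spectralP/hermitian_normalmx.
exists P, (spectral_diag A); split => //.
- move=> i; have /mxOverP := hermitian_spectral_diag_real Ah; exact.
- apply: prod_XsubC_eq; rewrite -chA {1}AE char_poly_conj //.
  rewrite char_poly_trig ?diag_mx_is_trig // big_map big_enum /=.
  by apply: eq_bigr => i _; rewrite mxE eqxx mulr1n.
- move=> x; rewrite -qf_diag /qf {1}AE.
  have -> : (x *m P^t*)^t* = P *m x^t*.
    by rewrite trmx_mul map_mxM trmxCK.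
  by rewrite !mulmxA.
Qed.


Lemma sum2 k (i j : 'I_k) (F : 'I_k -> C) : i != j ->
  (forall t, t != i -> t != j -> F t = 0) -> \sum_t F t = F i + F j.
Proof.
move=> ij F0; rewrite (bigD1 i) //= (bigD1 j) 1?eq_sym //= big1 ?addr0 //.
by move=> t /andP[ti tj]; apply: F0.
Qed.

Lemma sum1 k (i : 'I_k) (F : 'I_k -> C) :
  (forall t, t != i -> F t = 0) -> \sum_t F t = F i.
Proof.
by move=> F0; rewrite (bigD1 i) //= big1 ?addr0 // => t; apply: F0.
Qed.

Lemma qf1U k (P : 'M[C]_k) x : P^t* *m P = 1%:M -> qf 1%:M x = qf 1%:M (x *m P^t*).
Proof.
move=> PP; rewrite /qf.
have -> : (x *m P^t*)^t* = P *m x^t* by rewrite trmx_mul map_mxM trmxCK.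
by rewrite !mulmx1 mulmxA -(mulmxA x) PP mulmx1.
Qed.

Lemma qfE_nonneg k x : 0 <= @qf k (const_mx 1) x.
Proof. by rewrite qfE1 exprn_ge0. Qed.

Lemma qf1_ge0 k x : 0 <= @qf k 1%:M x.
Proof. by rewrite qf1 sumr_ge0 // => a _; rewrite exprn_ge0. Qed.

Lemma CS k x : @qf k (const_mx 1) x <= k%:R * qf 1%:M x.
Proof.
rewrite -subr_ge0 -qfZ -qfB.
have -> : k%:R *: (1%:M : 'M[C]_k) - const_mx 1 =
    \matrix_(a, b) (k%:R * (a == b)%:R - 1) by apply/matrixP=> a b; rewrite !mxE mulr_natr.
apply: qf_ge0.
- by move=> a b; rewrite mxE rpredB ?rpredM ?rpred_nat ?rpred1.
- by move=> a b; rewrite !mxE eq_sym.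
move=> a.
rewrite (eq_bigr (fun _ => 1)); last first.
  by move=> b ba; rewrite mxE eq_sym (negPf ba) mulr0 sub0r normrN normr1.
rewrite sumr_const cardC1 card_ord mxE eqxx mulr1.
have k0 : (0 < k)%N by case: a => a /= /(leq_ltn_trans (leq0n a)).
by rewrite -(prednK k0) mulrSr addrK.
Qed.

Variables (k : nat) (A P : 'M[C]_k) (d : 'rV[C]_k).
Hypotheses (PP : P *m P^t* = 1%:M) (PP' : P^t* *m P = 1%:M)
  (dr : forall i, d 0 i \is Num.real)
  (qfA : forall x, qf A x = \sum_i d 0 i * `|(x *m P^t*) 0 i| ^+ 2).

Let dl (i : 'I_k) : 'rV[C]_k := \row_t (t == i)%:R.

Lemma qf_dl i : qf A (dl i *m P) = d 0 i /\ qf 1%:M (dl i *m P) = 1.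
Proof.
have E : dl i *m P *m P^t* = dl i by rewrite -mulmxA PP mulmx1.
split; first rewrite qfA E.
  by rewrite (@sum1 _ i) ?mxE ?eqxx ?normr1 ?expr1n ?mulr1 // => t ti; rewrite mxE (negPf ti) normr0 expr0n mulr0.
rewrite (qf1U (P:=P)) // E qf1 (@sum1 _ i) ?mxE ?eqxx ?normr1 ?expr1n //.
by move=> t ti; rewrite mxE (negPf ti) normr0 expr0n.
Qed.

Lemma lower_all (lo a : C) : 0 <= a ->
  (forall x, lo * qf 1%:M x + a * qf (const_mx 1) x <= qf A x) ->
  forall i, lo <= d 0 i.
Proof.
move=> a0 H i; have [E1 E2] := qf_dl i.
have := H (dl i *m P); rewrite E1 E2 mulr1 => H'.
apply: le_trans H'; rewrite lerDl mulr_ge0 //; exact: qfE_nonneg.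
Qed.

Lemma upper_all (hi b : C) : 0 <= b ->
  (forall x, qf A x <= hi * qf 1%:M x + b * qf (const_mx 1) x) ->
  forall i, d 0 i <= hi + b * k%:R.
Proof.
move=> b0 H i; have [E1 E2] := qf_dl i.
have := H (dl i *m P); rewrite E1 E2 mulr1 => H'.
apply: le_trans H' _; rewrite lerD2l; apply: ler_wpM2l => //.
by have := CS (dl i *m P); rewrite E2 mulr1.
Qed.

Lemma lower_max (lo a T : C) : (0 < k)%N ->
  (forall x, lo * qf 1%:M x + a * qf (const_mx 1) x <= qf A x) ->
  (forall i, d 0 i <= T) -> lo + a * k%:R <= T.
Proof.
move=> k0 H HT.
pose x : 'rV[C]_k := const_mx 1.
have q1 : qf 1%:M x = k%:R.
  rewrite qf1 (eq_bigr (fun _ => 1)) ?sumr_const ?card_ord //.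
  by move=> t _; rewrite mxE normr1 expr1n.
have qE : qf (const_mx 1) x = k%:R * k%:R.
  rewrite qfE1 (eq_bigr (fun _ => 1)) ?sumr_const ?card_ord; last by move=> t _; rewrite mxE.
  by rewrite normr_nat expr2.
have := H x; rewrite q1 qE qfA => H1.
have H2 : \sum_i d 0 i * `|(x *m P^t*) 0 i| ^+ 2 <= T * k%:R.
  rewrite -q1 (qf1U (P:=P)) // qf1 mulr_sumr; apply: ler_sum => t _.
  by rewrite ler_wpM2r // exprn_ge0.
have := le_trans H1 H2; rewrite mulrA -mulrDl.
by rewrite ler_pM2r // ltr0n.
Qed.

Lemma upper_second (hi b : C) :
  (forall x, qf A x <= hi * qf 1%:M x + b * qf (const_mx 1) x) ->
  forall i j, i != j -> hi < d 0 i -> hi < d 0 j -> False.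
Proof.
move=> H i j ij hii hij.
pose w t := \sum_a P t a.
pose p : C := if (w j == 0) && (w i == 0) then 1 else w j.
pose q : C := if (w j == 0) && (w i == 0) then 0 else w i.
have pq0 : p * w i - q * w j = 0.
  rewrite /p /q; case: ifP => [/andP[/eqP -> /eqP ->]|_]; first by rewrite !(mulr0, mul0r, subr0).
  by rewrite mulrC subrr.
have pqn : (p != 0) || (q != 0).
  rewrite /p /q; case: ifP => [_|]; first by rewrite oner_eq0.
  by move/negbT; rewrite negb_and.
pose y : 'rV[C]_k := \row_t ((t == i)%:R * p - (t == j)%:R * q).
pose x := y *m P.
have xy : x *m P^t* = y by rewrite -mulmxA PP mulmx1.
have yi : y 0 i = p by rewrite mxE eqxx (negPf ij) mul1r mul0r subr0.
have yj : y 0 j = - q by rewrite mxE eqxx eq_sym (negPf ij) mul1r mul0r sub0r.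
have y0 t : t != i -> t != j -> y 0 t = 0.
  by move=> ti tj; rewrite mxE (negPf ti) (negPf tj) !mul0r subr0.
have sx : \sum_a x 0 a = 0.
  rewrite /x (eq_bigr (fun a => \sum_t y 0 t * P t a)); last by move=> a _; rewrite mxE.
  rewrite exchange_big /= (sum2 ij); last by move=> t ti tj; rewrite -mulr_sumr y0 ?mul0r.
  by rewrite -!mulr_sumr yi yj -/(w i) -/(w j) mulNr.
have := H x; rewrite qfE1 sx normr0 expr0n /= mulr0 addr0.
rewrite qfA (qf1U (P:=P)) // xy qf1 mulr_sumr.
rewrite (sum2 ij); last by move=> t ti tj; rewrite y0 // normr0 expr0n mulr0.
rewrite (sum2 ij (F := fun t => hi * _)); last by move=> t ti tj; rewrite y0 // normr0 expr0n mulr0.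
rewrite yi yj normrN => Hle.
have Hi : 0 < d 0 i - hi by rewrite subr_gt0.
have Hj : 0 < d 0 j - hi by rewrite subr_gt0.
have Hgt : 0 < (d 0 i - hi) * `|p| ^+ 2 + (d 0 j - hi) * `|q| ^+ 2.
  case/orP: pqn => [p0|q0].
    apply: (@lt_le_trans _ _ ((d 0 i - hi) * `|p| ^+ 2)).
      by rewrite mulr_gt0 // exprn_gt0 // normr_gt0.
    by rewrite lerDl mulr_ge0 // ?exprn_ge0 // ltW.
  apply: (@lt_le_trans _ _ ((d 0 j - hi) * `|q| ^+ 2)).
    by rewrite mulr_gt0 // exprn_gt0 // normr_gt0.
  by rewrite lerDr mulr_ge0 // ?exprn_ge0 // ltW.
have E : (d 0 i - hi) * `|p| ^+ 2 + (d 0 j - hi) * `|q| ^+ 2 =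
  (d 0 i * `|p| ^+ 2 + d 0 j * `|q| ^+ 2) - (hi * `|p| ^+ 2 + hi * `|q| ^+ 2) by ring.
by move: Hgt; rewrite E subr_gt0 => /lt_geF; rewrite Hle.
Qed.

End CoreS.

Section MainS.
Variable R : rcfType.
Local Notation toC := (real_complex R).

Lemma nC (x : R) : `|toC x| = toC `|x|.
Proof. by rewrite normc_def /= expr0n addr0 sqrtr_sqr. Qed.
Lemma rC (x : R) : toC x \is Num.real.
Proof. by apply/complex_realP; exists x. Qed.

Definition dom k (Q : 'M[R]_k) := forall p, \sum_(q | q != p) `|Q p q| <= Q p p.

Lemma psd_transfer k (Q : 'M[R]_k) x : (forall p q, Q p q = Q q p) -> dom Q ->
  0 <= qf (map_mx toC Q) x.
Proof.
move=> Qs Qd; apply: qf_ge0.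
- by move=> p q; rewrite mxE rC.
- by move=> p q; rewrite !mxE Qs.
move=> p; rewrite mxE.
under eq_bigr => q _ do rewrite mxE nC.
by rewrite -rmorph_sum lecR.
Qed.

Lemma setup k (K : 'M[R]_k) (s : seq R) : (forall p q, K p q = K q p) ->
  sorted_eigenvalues K s ->
  exists (P : 'M[R[i]]_k) (d : 'rV[R[i]]_k),
  [/\ P *m P^t* = 1%:M, P^t* *m P = 1%:M, (forall i, d 0 i \is Num.real),
     perm_eq (map toC s) [seq d 0 i | i <- enum 'I_k] &
     forall x, qf (map_mx toC K) x = \sum_i d 0 i * `|(x *m P^t*) 0 i| ^+ 2].
Proof.
move=> Ks [_ chK]; apply: spectral_form.
  apply/is_hermitianmxP; rewrite expr0 scale1r; apply/matrixP => p q.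
  by rewrite !mxE conj_Creal ?rC // Ks.
by rewrite -map_char_poly chK rmorph_prod big_map; apply: eq_bigr => y _; exact: map_polyXsubC.
Qed.

Lemma size_s k (K : 'M[R]_k) (s : seq R) : sorted_eigenvalues K s -> size s = k.
Proof.
move=> [_ chK]; have := size_char_poly K; rewrite chK size_prod_XsubC.
by case.
Qed.


Lemma sorted_le_last (s : seq R) y : sorted <=%R s -> y \in s -> y <= s`_(size s).-1.
Proof.
move=> Hs ys; rewrite -(nth_index 0 ys).
have ilt : (index y s < size s)%N by rewrite index_mem.
apply: (sorted_leq_nth le_trans lexx 0 Hs) => //; rewrite ?inE.
  by rewrite prednK // (leq_ltn_trans (leq0n _) ilt).
by rewrite -ltnS prednK // (leq_ltn_trans (leq0n _) ilt).
Qed.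

Lemma map_Q k (K : 'M[R]_k) (c1 c2 : R) :
  map_mx toC (K - c1 *: 1%:M - c2 *: const_mx 1) =
  map_mx toC K - toC c1 *: 1%:M - toC c2 *: const_mx 1.
Proof. by apply/matrixP => p q; rewrite !mxE !rmorphB !rmorphM /= rmorph_nat rmorph1. Qed.

Lemma map_Q2 k (K : 'M[R]_k) (c1 c2 : R) :
  map_mx toC (c1 *: 1%:M + c2 *: const_mx 1 - K) =
  toC c1 *: 1%:M + toC c2 *: const_mx 1 - map_mx toC K.
Proof. by apply/matrixP => p q; rewrite !mxE !rmorphB !rmorphD !rmorphM /= rmorph_nat rmorph1. Qed.

Lemma lower_K k (K : 'M[R]_k) s (lo a : R) : (forall p q, K p q = K q p) ->
  sorted_eigenvalues K s -> 0 <= a ->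
  dom (K - lo *: 1%:M - a *: const_mx 1) ->
  (forall y, y \in s -> lo <= y) /\ ((0 < k)%N -> lo + a * k%:R <= s`_k.-1).
Proof.
move=> Ks Hs a0 D; have [P [d [PP PP' dr perm qfA]]] := setup Ks Hs.
have H1 x : toC lo * qf 1%:M x + toC a * qf (const_mx 1) x <= qf (map_mx toC K) x.
  have h : forall p q, (K - lo *: 1%:M - a *: const_mx 1) p q = (K - lo *: 1%:M - a *: const_mx 1) q p.
    by move=> p q; rewrite !mxE Ks eq_sym.
  have := psd_transfer x h D; rewrite map_Q !qfB !qfZ => H.
  have E : forall u v w : R[i], w - (u + v) = w - u - v by move=> *; ring.
  by rewrite -subr_ge0 E.
have a0' : 0 <= toC a by rewrite ler0c.
have ins y : y \in s -> exists i, d 0 i = toC y.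
  move=> ys; have : toC y \in [seq d 0 i | i <- enum 'I_k] by rewrite -(perm_mem perm) map_f.
  by case/mapP => i _ ->; exists i.
have ind i : exists2 y, y \in s & d 0 i = toC y.
  have : d 0 i \in map toC s by rewrite (perm_mem perm) map_f // mem_enum.
  by case/mapP => y ys ->; exists y.
split.
  move=> y /ins [i di]; have := lower_all PP PP' qfA a0' H1 i.
  by rewrite di lecR.
move=> k0; have := size_s Hs => sz.
have := @lower_max _ _ _ _ _ PP' qfA (toC lo) (toC a) (toC s`_k.-1) k0 H1.
rewrite -(rmorph_nat (real_complex R)) -rmorphM -rmorphD lecR; apply => i.
have [y ys ->] := ind i; rewrite lecR -sz; exact: sorted_le_last (proj1 Hs) ys.
Qed.

Lemma upper_K k (K : 'M[R]_k) s (hi b : R) : (forall p q, K p q = K q p) ->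
  sorted_eigenvalues K s -> 0 <= b ->
  dom (hi *: 1%:M + b *: const_mx 1 - K) ->
  (forall y, y \in s -> y <= hi + b * k%:R) /\ (forall j, (j.+1 < k)%N -> s`_j <= hi).
Proof.
move=> Ks Hs b0 D; have [P [d [PP PP' dr perm qfA]]] := setup Ks Hs.
have H2 x : qf (map_mx toC K) x <= toC hi * qf 1%:M x + toC b * qf (const_mx 1) x.
  have h : forall p q, (hi *: 1%:M + b *: const_mx 1 - K) p q = (hi *: 1%:M + b *: const_mx 1 - K) q p.
    by move=> p q; rewrite !mxE Ks eq_sym.
  have := psd_transfer x h D; rewrite map_Q2 qfB qfD !qfZ.
  by rewrite subr_ge0.
have b0' : 0 <= toC b by rewrite ler0c.
have ins y : y \in s -> exists i, d 0 i = toC y.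
  move=> ys; have : toC y \in [seq d 0 i | i <- enum 'I_k] by rewrite -(perm_mem perm) map_f.
  by case/mapP => i _ ->; exists i.
have sz := size_s Hs.
split.
  move=> y /ins [i di]; have := upper_all PP PP' qfA b0' H2 i.
  by rewrite di -(rmorph_nat (real_complex R)) -rmorphM -rmorphD lecR.
move=> j jk; rewrite leNgt; apply/negP => hj.
have lt2 : (1 < k)%N by apply: leq_ltn_trans jk.
have sk2 : hi < s`_k.-2.
  apply: (lt_le_trans hj); apply: (sorted_leq_nth le_trans lexx 0 (proj1 Hs)); rewrite ?inE ?sz //.
  all: try lia.
have sk1 : hi < s`_k.-1.
  apply: (lt_le_trans hj); apply: (sorted_leq_nth le_trans lexx 0 (proj1 Hs)); rewrite ?inE ?sz //.
  all: try lia.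
have Ed : drop k.-2 s = [:: s`_k.-2; s`_k.-1].
  rewrite (drop_nth 0); last by rewrite sz; lia.
  rewrite (drop_nth 0); last by rewrite sz; lia.
  have -> : (k.-2).+1 = k.-1 by lia.
  by rewrite drop_oversize // sz; lia.
have cnt : (1 < count (fun y => (hi < y)%R) s)%N.
  rewrite -(cat_take_drop k.-2 s) count_cat Ed /= sk2 sk1 /=; lia.
have cntC : (1 < count (fun i : 'I_k => (toC hi < d 0 i)%R) (enum 'I_k))%N.
  have := permP perm (fun z => toC hi < z); rewrite !count_map => <-.
  by rewrite (eq_count (a2 := fun y : R => (hi < y)%R)) // => y /=; rewrite ltcR.
move: cntC; rewrite -size_filter.
have : uniq [seq i <- enum 'I_k | toC hi < d 0 i] by rewrite filter_uniq // enum_uniq.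
have mf i : i \in [seq i <- enum 'I_k | toC hi < d 0 i] -> toC hi < d 0 i.
  by rewrite mem_filter => /andP[].
move: mf; case: [seq i <- enum 'I_k | toC hi < d 0 i] => [|i0 [|j0 t]] //= mf.
case/andP; rewrite inE negb_or => /andP[ij _] _ _.
apply: (upper_second PP PP' qfA H2 ij); apply: mf; rewrite !inE eqxx ?orbT //.
Qed.

End MainS.

Lemma sum_inj_le (R : numDomainType) m n (h : 'I_m -> 'I_n) (F : 'I_n -> R) :
  injective h -> (forall j, 0 <= F j) -> \sum_b F (h b) <= \sum_j F j.
Proof.
move=> hi F0.
have -> : \sum_b F (h b) = \sum_(j in h @: [set: 'I_m]) F j.
  by rewrite big_imset /=; [apply: eq_bigl => b; rewrite in_setT | exact: in2W hi].
rewrite [X in _ <= X](bigID (mem (h @: [set: 'I_m]))) /= lerDl.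
by apply: sumr_ge0.
Qed.

Lemma shift_inj n k0 : injective (@shift_ord n k0).
Proof. by move=> x y /(congr1 val) /= /eqP; rewrite eqn_add2l => /eqP /val_inj. Qed.

Lemma subsum (R : numDomainType) n k0 (f : 'I_n -> R) (p : 'I_(n - k0)) :
  (forall j, j != shift_ord p -> 0 <= f j) ->
  \sum_(q | q != p) f (shift_ord q) <= \sum_(j | j != shift_ord p) f j.
Proof.
move=> f0; rewrite big_mkcond [X in _ <= X]big_mkcond /=.
pose F j := if j != @shift_ord n k0 p then f j else 0.
have -> : \sum_q (if q != p then f (@shift_ord n k0 q) else 0) = \sum_q F (@shift_ord n k0 q).
  by apply: eq_bigr => q _; rewrite /F (inj_eq (@shift_inj n k0)).
apply: sum_inj_le; first exact: shift_inj.
by move=> j; rewrite /F; case: ifP => // /f0.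
Qed.

Lemma sum_const_ne (R : numDomainType) n (r : 'I_n) (c : R) :
  \sum_(j | j != r) c = c *+ n.-1.
Proof. by rewrite sumr_const cardC1 card_ord. Qed.

Lemma dom_lower (R : rcfType) n k0 (J : 'M[R]_n) (l : R) : (3 <= n)%N ->
  0 < l -> diag_dominant J -> (forall i, 0 <= J i i) ->
  (forall i j, i != j -> l <= J i j) ->
  dom (lr_sub k0 J - ((n - 2)%:R * l) *: 1%:M - l *: const_mx 1).
Proof.
move=> n3 l0 Dd Jd Joff p.
have offp q : q != p -> @shift_ord n k0 q != @shift_ord n k0 p by rewrite (inj_eq (@shift_inj n k0)).
under eq_bigr => q qp.
  rewrite !mxE eq_sym (negPf qp) mulr0 subr0 mulr1 ger0_norm; last first.
    by rewrite subr_ge0 Joff // eq_sym offp.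
  over.
rewrite !mxE eqxx mulr1 mulr1.
set r := @shift_ord n k0 p.
apply: le_trans (subsum (f := fun j => J r j - l) _) _ => /=.
  by move=> j jr; rewrite subr_ge0 Joff // eq_sym.
rewrite sumrB sum_const_ne.
have HS : \sum_(j | j != r) J r j <= J r r.
  have := Dd r; rewrite /Delta subr_ge0 ger0_norm //; apply: le_trans.
  apply: ler_sum => j jr; rewrite ger0_norm //; apply: le_trans (ltW l0) _.
  by apply: Joff; rewrite eq_sym.
have -> : n.-1 = (n - 2).+1 by lia.
rewrite mulrS -mulr_natl; lra.
Qed.

Lemma dom_upper (R : rcfType) n k0 (J : 'M[R]_n) (m : R) : (3 <= n)%N ->
  diag_balanced J -> (forall i, 0 <= J i i) ->
  (forall i j, i != j -> 0 <= J i j <= m) ->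
  dom (((n - 2)%:R * m) *: 1%:M + m *: const_mx 1 - lr_sub k0 J).
Proof.
move=> n3 Db Jd Joff p.
have offp q : q != p -> @shift_ord n k0 q != @shift_ord n k0 p by rewrite (inj_eq (@shift_inj n k0)).
under eq_bigr => q qp.
  rewrite !mxE eq_sym (negPf qp) mulr0 add0r mulr1 ger0_norm; last first.
    rewrite subr_ge0; have /andP[_ ->] // : 0 <= J (@shift_ord n k0 p) (@shift_ord n k0 q) <= m.
    by apply: Joff; rewrite eq_sym offp.
  over.
rewrite !mxE eqxx mulr1 mulr1.
set r := @shift_ord n k0 p.
apply: le_trans (subsum (f := fun j => m - J r j) _) _ => /=.
  move=> j jr; rewrite subr_ge0; have /andP[_ ->] // : 0 <= J r j <= m.
  by apply: Joff; rewrite eq_sym.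
rewrite sumrB sum_const_ne.
have HS : \sum_(j | j != r) J r j = J r r.
  have := Db r; rewrite /Delta ger0_norm // => /eqP; rewrite subr_eq0 => /eqP ->.
  apply: eq_bigr => j jr; rewrite ger0_norm //.
  have /andP[-> _] // : 0 <= J r j <= m.
  by apply: Joff; rewrite eq_sym.
rewrite HS.
have -> : n.-1 = (n - 2).+1 by lia.
rewrite mulrS -mulr_natl; lra.
Qed.

Lemma lr_sym (R : rcfType) n k0 (J : 'M[R]_n) : J^T = J ->
  forall p q, lr_sub k0 J p q = lr_sub k0 J q p.
Proof. by move=> /matrixP JT p q; rewrite !mxE -[in LHS]JT mxE. Qed.

Local Close Scope sesquilinear_scope.

Theorem lemma7p2 (R : rcfType) (n : nat) (l m : R) :
  (3 <= n)%N -> 0 < l -> l <= m ->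
  (forall J : 'M[R]_n,
     J^T = J -> diag_balanced J -> (forall i, 0 <= J i i) ->
     (forall i j : 'I_n, i != j -> l <= J i j <= m) ->
     forall i : nat, (1 <= i <= n)%N ->
     forall s : seq R, sorted_eigenvalues (lr_sub i.-1 J) s ->
       (forall j : nat, (1 <= j <= n - i)%N ->
          (n - 2)%:R * l <= s`_j.-1 <= (n - 2)%:R * m) /\
       (2 * n - i - 1)%:R * l <= s`_(n - i) <= (2 * n - i - 1)%:R * m) /\
  (forall J : 'M[R]_n,
     J^T = J -> diag_dominant J -> (forall i, 0 <= J i i) ->
     (forall i j : 'I_n, i != j -> l <= J i j <= m) ->
     forall i : nat, (1 <= i <= n)%N ->
     forall s : seq R, sorted_eigenvalues (lr_sub i.-1 J) s ->
       (forall j : nat, (1 <= j <= n - i)%N -> (n - 2)%:R * l <= s`_j.-1) /\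
       (2 * n - i - 1)%:R * l <= s`_(n - i)).
Proof.
move=> n3 l0 lm.
have low (J : 'M[R]_n) : J^T = J -> diag_dominant J -> (forall i, 0 <= J i i) ->
     (forall i j : 'I_n, i != j -> l <= J i j <= m) ->
     forall i : nat, (1 <= i <= n)%N ->
     forall s : seq R, sorted_eigenvalues (lr_sub i.-1 J) s ->
       (forall j : nat, (1 <= j <= n - i)%N -> (n - 2)%:R * l <= s`_j.-1) /\
       (2 * n - i - 1)%:R * l <= s`_(n - i).
  move=> JT Dd Jd Joff i /andP[i1 iN] s Hs.
  have Joff' p q : p != q -> l <= J p q by move/Joff/andP=> [].
  have [Hall Hmax] := lower_K (lr_sym (k0:=i.-1) JT) Hs (ltW l0) (dom_lower (k0:=i.-1) n3 l0 Dd Jd Joff').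
  have sz := size_s Hs.
  split.
    move=> j /andP[j1 jn]; apply: Hall; apply: mem_nth; rewrite sz; lia.
  have k0 : (0 < n - i.-1)%N by lia.
  have := Hmax k0; have -> : ((n - i.-1).-1 = n - i)%N by lia.
  have E : (2 * n - i - 1)%:R * l = (n - 2)%:R * l + l * (n - i.-1)%:R.
    by rewrite [l * _]mulrC -mulrDl -natrD; congr (_%:R * _); lia.
  by rewrite E.
split; last exact: low.
move=> J JT Db Jd Joff i iN s Hs.
have Dd : diag_dominant J by move=> r; rewrite Db.
have [lowA lowB] := low J JT Dd Jd Joff i iN s Hs.
case/andP: iN => i1 iN.
have Joff' p q : p != q -> 0 <= J p q <= m.
  by move/Joff/andP=> [lp ->]; rewrite (le_trans (ltW l0) lp).
have [Hall Hsec] := upper_K (lr_sym (k0:=i.-1) JT) Hs (le_trans (ltW l0) lm) (dom_upper (k0:=i.-1) n3 Db Jd Joff').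
have sz := size_s Hs.
split.
  move=> j /andP[j1 jn]; rewrite lowA ?j1 ?jn //=.
  apply: Hsec; lia.
rewrite lowB /=.
have := Hall (s`_(n - i)); rewrite mem_nth; last by rewrite sz; lia.
have E : (2 * n - i - 1)%:R * m = (n - 2)%:R * m + m * (n - i.-1)%:R.
  by rewrite [m * _]mulrC -mulrDl -natrD; congr (_%:R * _); lia.
by rewrite E; apply.
Qed.
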